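(* Let $G=(V,E,p,(V_{E},V_{O}))$ be a parity game on which a lifting sequence is applied, such that at some point a vertex $v$ with $p(v)=k$ is the first vertex whose measure value becomes $\top$, and let $\rho$ be the measure at that point. Let $A=\mathrm{Attr}^{\ge k}_{O}(\{v\})$. (a) If $v\in V_{O}$, then for every successor $u$ of $v$ whose $\rho$-value is maximal among $\{\rho(w):w\in\mathrm{post}(v)\}$ there is an Odd-dominion $D_u$ containing $A$ such that $p(w)\ge k$ for all $w\in D_u$. Moreover, Odd has a winning strategy $\sigma$ that is closed on $D_u$, satisfies $\sigma(v)=u$, and on $A\setminus\{v\}$ is the strategy attracting towards $v$. (b) If $v\in V_{E}$, then there is an Odd-dominion $D$ containing $A$ such that $p(w)\ge k$ for all $w\in D$. Moreover, Odd has a winning strategy $\sigma$ that is closed on $D$ and on $A\setminus\{v\}$ is the strategy attracting towards $v$. In this case $\mathrm{post}(v)\subseteq D$.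
   Context: A parity game $G=(V,E,p,(V_{E},V_{O}))$: finite $V$ partitioned into $V_{E}$ (Even) and $V_{O}$ (Odd), total edge relation $E$, priorities $p:V\to\mathbb{N}$; $\mathrm{post}(v)=\{w:(v,w)\in E\}$, $V_i=\{v:p(v)=i\}$, $V_{\ge k}=\{v:p(v)\ge k\}$. Plays are infinite paths; Even wins iff the least priority occurring infinitely often is even. A set $D$ is an Odd-dominion if Odd has a strategy such that every play starting in $D$ consistent with it is won by Odd and stays in $D$; a strategy is closed on $D$ if all consistent plays from $D$ stay in $D$. Let $d$ be one more than the largest priority. $\mathbb{M}$ consists of $\top$ and all tuples $(m_0,\dots,m_{d-1})\in\mathbb{N}^d$ with $m_i=0$ for even $i$ and $m_i\le|V_i|$ for odd $i$, ordered lexicographically with $\top$ maximal; $m<_i m'$ compares positions $0..i$ only (tuples $<_i\top$, $\top=_i\top$). $\mathrm{Prog}(\rho,v,w)$, for $w\in\mathrm{post}(v)$, is the least $m\in\mathbb{M}$ with $m\ge_{p(v)}\rho(w)$ if $p(v)$ is even, and with $m>_{p(v)}\rho(w)$ or $m=\rho(w)=\top$ if $p(v)$ is odd. $\mathrm{Lift}(\rho,v)$ replaces $\rho(v)$ by $\max\{\rho(v),\min_{w\in\mathrm{post}(v)}\mathrm{Prog}(\rho,v,w)\}$ if $v\in V_{E}$, and by $\max\{\rho(v),\max_{w\in\mathrm{post}(v)}\mathrm{Prog}(\rho,v,w)\}$ if $v\in V_{O}$. A lifting sequence is $\rho_0,\rho_1,\dots$ with $\rho_0\equiv(0,\dots,0)$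 and $\rho_{j+1}=\mathrm{Lift}(\rho_j,v_j)\neq\rho_j$ for some vertex $v_j$. Guarded attractor: for $U\subseteq V_{\ge k}$, $\mathrm{Attr}^{\ge k}_{O}(U)$ is the least $A$ with $U\subseteq A\subseteq V_{\ge k}$ such that every $u\in V_{O}\cap V_{\ge k}$ with $\mathrm{post}(u)\cap A\ne\emptyset$ is in $A$ and every $u\in V_{E}\cap V_{\ge k}$ with $\mathrm{post}(u)\subseteq A$ is in $A$. Computing $A$ as the limit of $A_0=U$, $A_{j+1}=A_j\cup\{$vertices added by the rules from $A_j\}$, the strategy attracting towards $U$ maps each $u\in(A\setminus U)\cap V_{O}$ first added in $A_{j+1}$ to a successor in $A_j$. *)

(* Defs.v *)
From mathcomp Require Import all_boot.
Set Implicit Arguments.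
Unset Strict Implicit.
Unset Printing Implicit Defensive.

Section ParityGame.
(* A parity game: finite vertex set V, edge relation E (assumed total in the
   theorem), priorities p, and VO = vertices owned by Odd; the vertices of
   Even are the complement of VO. *)
Variables (V : finType) (E : rel V) (p : V -> nat) (VO : {set V}).

Definition post (v : V) : {set V} := [set w | E v w].
Definition Vpr (i : nat) : {set V} := [set v | p v == i].
Definition Vge (k : nat) : {set V} := [set v | k <= p v].

Definition dim : nat := (\max_(v : V) p v).+1.

(* Measures: Top, or a tuple (m_0,...,m_{d-1}) represented as a seq *)
Inductive meas := Tup of seq nat | Top.

Definition is_top (m : meas) : bool := if m is Top then true else false.

Fixpoint lexlt (s t : seq nat) : bool :=
  match s, t with
  | x :: s', y :: t' => (x < y) || ((x == y) && lexlt s' t')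
  | _, _ => false
  end.
Fixpoint lexle (s t : seq nat) : bool :=
  match s, t with
  | [::], _ => true
  | x :: s', y :: t' => (x < y) || ((x == y) && lexle s' t')
  | _ :: _, [::] => false
  end.

Definition inM (m : meas) : bool :=
  match m with
  | Top => true
  | Tup s => (size s == dim) &&
      all (fun i => if odd i then nth 0 s i <= #|Vpr i| else nth 0 s i == 0)
          (iota 0 dim)
  end.

Definition mle (m m' : meas) : bool :=
  match m, m' with
  | _, Top => true
  | Top, Tup _ => false
  | Tup s, Tup t => lexle s t
  end.

Definition mlt_i (i : nat) (m m' : meas) : bool :=
  match m, m' with
  | Tup s, Tup t => lexlt (take i.+1 s) (take i.+1 t)
  | Tup _, Top => true
  | Top, _ => false
  end.
Definition mle_i (i : nat) (m m' : meas) : bool :=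
  match m, m' with
  | Tup s, Tup t => lexle (take i.+1 s) (take i.+1 t)
  | _, Top => true
  | Top, Tup _ => false
  end.

Definition mmax (a b : meas) : meas := if mle a b then b else a.

Definition prog_cond (rho : V -> meas) (v w : V) (m : meas) : bool :=
  if odd (p v) then mlt_i (p v) (rho w) m || (is_top m && is_top (rho w))
  else mle_i (p v) (rho w) m.

Definition is_prog (rho : V -> meas) (v w : V) (m : meas) : Prop :=
  [/\ inM m, prog_cond rho v w m &
      forall m', inM m' -> prog_cond rho v w m' -> mle m m'].

Definition prog_val (rho : V -> meas) (v : V) (m : meas) : Prop :=
  exists2 w, E v w & is_prog rho v w m.

Definition is_min (P : meas -> Prop) (x : meas) : Prop :=
  P x /\ forall y, P y -> mle x y.
Definition is_max (P : meas -> Prop) (x : meas) : Prop :=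
  P x /\ forall y, P y -> mle y x.

Definition is_lift (rho : V -> meas) (v : V) (rho' : V -> meas) : Prop :=
  (forall u, u != v -> rho' u = rho u) /\
  exists x, (if v \in VO then is_max (prog_val rho v) x
             else is_min (prog_val rho v) x)
            /\ rho' v = mmax (rho v) x.

Definition lifting_seq (rhos : nat -> V -> meas) (vs : nat -> V) (n : nat)
  : Prop :=
  rhos 0 = (fun _ => Tup (nseq dim 0)) /\
  forall j, j < n -> is_lift (rhos j) (vs j) (rhos j.+1) /\ rhos j.+1 <> rhos j.

Definition attr_cond (A : {set V}) (u : V) : bool :=
  if u \in VO then [exists w, E u w && (w \in A)]
  else [forall w, E u w ==> (w \in A)].

Definition attr_closed (k : nat) (A : {set V}) : bool :=
  [forall u, ((u \in Vge k) && attr_cond A u) ==> (u \in A)].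

Definition Attr (k : nat) (U : {set V}) : {set V} :=
  \bigcap_(A : {set V} | [&& U \subset A, A \subset Vge k & attr_closed k A]) A.

Definition attr_step (k : nat) (A : {set V}) : {set V} :=
  A :|: [set u in Vge k | attr_cond A u].
Definition attr_iter (k : nat) (U : {set V}) (j : nat) : {set V} :=
  iter j (attr_step k) U.

Definition is_strategy (sigma : V -> V) : Prop :=
  forall u, u \in VO -> E u (sigma u).

Definition attracting (k : nat) (U : {set V}) (sigma : V -> V) : Prop :=
  forall j u, u \in VO -> u \notin U ->
    u \in attr_iter k U j.+1 -> u \notin attr_iter k U j ->
    sigma u \in attr_iter k U j.

Definition is_play (pi : nat -> V) : Prop := forall i, E (pi i) (pi i.+1).
Definition consistent (sigma : V -> V) (pi : nat -> V) : Prop :=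
  forall i, pi i \in VO -> pi i.+1 = sigma (pi i).

Definition odd_wins (pi : nat -> V) : Prop :=
  exists q, [/\ odd q,
    (forall N, exists2 i, N <= i & p (pi i) = q) &
    (exists N, forall i, N <= i -> q <= p (pi i))].

Definition closed_on (sigma : V -> V) (D : {set V}) : Prop :=
  forall pi, is_play pi -> consistent sigma pi -> pi 0 \in D ->
    forall i, pi i \in D.

Definition wins_from (sigma : V -> V) (D : {set V}) : Prop :=
  forall pi, is_play pi -> consistent sigma pi -> pi 0 \in D -> odd_wins pi.

Definition odd_dominion (D : {set V}) : Prop :=
  exists sigma, [/\ is_strategy sigma, wins_from sigma D & closed_on sigma D].

End ParityGame.

(* Main.v *)
Require Import Defs.
From mathcomp Require Import all_boot.
From Stdlib Require Import Classical ClassicalEpsilon Lia.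
From Stdlib Require List.
From mathcomp Require Import zify.
Set Implicit Arguments. Unset Strict Implicit. Unset Printing Implicit Defensive.

Lemma fchoice (A B : Type) (P : A -> B -> Prop) :
  (forall x, exists y, P x y) -> exists f, forall x, P x (f x).
Proof.
move=> H; exists (fun x => proj1_sig (constructive_indefinite_description _ (H x))).
move=> x; exact: (proj2_sig (constructive_indefinite_description _ (H x))).
Qed.

Lemma it_mono (T : finType) (f : {set T} -> {set T}) (X : {set T}) :
  (forall Y : {set T}, Y \subset f Y) -> forall i j, i <= j -> iter i f X \subset iter j f X.
Proof.
move=> ext i j /subnK <-; elim: (j - i) => [|d IH]; first by rewrite add0n.
by rewrite addSn /=; apply: subset_trans IH (ext _).
Qed.

Lemma it_fix (T : finType) (f : {set T} -> {set T}) (X : {set T}) :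
  (forall Y : {set T}, Y \subset f Y) -> f (iter #|T| f X) = iter #|T| f X.
Proof.
move=> ext.
have [i [lei fi]] : exists i, i <= #|T| /\ f (iter i f X) = iter i f X.
  apply: NNPP => H.
  have grow : forall i, i <= #|T|.+1 -> i <= #|iter i f X|.
    elim=> [|i IH] // lt; have le : i <= #|T| by [].
    have IH' := IH (ltnW lt).
    have pr : iter i f X \proper iter i.+1 f X.
      rewrite properEneq ext andbT /=; apply/eqP => eq; apply: H.
      by exists i; split => //; rewrite -[RHS]eq.
    by apply: leq_ltn_trans IH' (proper_card pr).
  by have := leq_trans (grow _ (leqnn _)) (max_card _); rewrite ltnn.
have cst : forall m, iter (i + m) f X = iter i f X.
  by elim=> [|m IH]; rewrite ?addn0 // addnS /= IH fi.
by rewrite -(subnKC lei) cst.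
Qed.

Lemma it_sub (T : finType) (f : {set T} -> {set T}) (X : {set T}) :
  (forall Y : {set T}, Y \subset f Y) -> forall m, iter m f X \subset iter #|T| f X.
Proof.
move=> ext m; case: (leqP m #|T|) => le; first exact: it_mono.
have cst : forall d, iter (#|T| + d) f X = iter #|T| f X.
  by elim=> [|d IH]; rewrite ?addn0 // addnS /= IH it_fix.
by rewrite -(subnKC (ltnW le)) cst.
Qed.

Section Game.
Variables (V : finType) (E : rel V) (p : V -> nat) (VO : {set V}).

Implicit Types (U T W X Y : {set V}) (b : bool) (x y : V) (pi : nat -> V) (s a : V -> V).
Definition own (b : bool) (x : V) := (x \in VO) == b.
Definition winsp (b : bool) (pi : nat -> V) : Prop :=
  if b then odd_wins p pi else ~ odd_wins p pi.
Definition play_in (U : {set V}) (pi : nat -> V) :=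
  forall i, pi i \in U /\ E (pi i) (pi i.+1).
Definition cons_b (b : bool) (s : V -> V) (pi : nat -> V) :=
  forall i, own b (pi i) -> pi i.+1 = s (pi i).
Definition closedb b (U W : {set V}) s := forall x, x \in W ->
  (own b x -> E x (s x) /\ s x \in W) /\
  (~~ own b x -> forall y, y \in U -> E x y -> y \in W).
Definition winsb b (U W : {set V}) s := forall pi,
  play_in U pi -> cons_b b s pi -> pi 0 \in W -> winsp b pi.
Definition totalU (U : {set V}) := forall x, x \in U -> exists2 y, y \in U & E x y.

Lemma ownN b x : own (~~ b) x = ~~ own b x.
Proof. by rewrite /own; case: b; case: (x \in VO). Qed.

Lemma stay b U W s pi : closedb b U W s -> play_in U pi -> cons_b b s pi ->
  pi 0 \in W -> forall i, pi i \in W.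
Proof.
move=> cl pl co p0; elim=> [|i IH] //.
have [h1 h2] := cl _ IH; case o: (own b (pi i)).
  by rewrite (co _ o); case: (h1 o).
by apply: h2; [rewrite o | case: (pl i.+1) | case: (pl i)].
Qed.

Definition shift (pi : nat -> V) N := fun i => pi (N + i).

Lemma odd_wins_shift pi N : odd_wins p (shift pi N) <-> odd_wins p pi.
Proof.
rewrite /odd_wins /shift; split.
  move=> [q [oq inf [M ev]]]; exists q; split => //.
    move=> N'; have [i le e] := inf N'; exists (N + i) => //.
    by apply: leq_trans le (leq_addl _ _).
  exists (N + M) => i le; have := ev (i - N).
  rewrite subnKC; last by apply: leq_trans le; apply: leq_addr.
  by apply; rewrite leq_subRL // ?(leq_trans (leq_addr _ _) le).
move=> [q [oq inf [M ev]]]; exists q; split => //.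
  move=> N'; have [i le e] := inf (N + N'); exists (i - N).
    by rewrite leq_subRL // (leq_trans (leq_addr _ _) le).
  by rewrite subnKC // (leq_trans (leq_addr _ _) le).
by exists M => i le; apply: ev; apply: leq_trans le (leq_addl _ _).
Qed.

Lemma winsp_shift b pi N : winsp b (shift pi N) <-> winsp b pi.
Proof. by case: b => /=; rewrite odd_wins_shift. Qed.

Lemma play_shift U pi N : play_in U pi -> play_in U (shift pi N).
Proof. by move=> pl i; rewrite /shift addnS; apply: pl. Qed.

Lemma cons_shift b s pi N : cons_b b s pi -> cons_b b s (shift pi N).
Proof. by move=> co i; rewrite /shift addnS; apply: co. Qed.

Lemma min_wins pi q : (forall i, q <= p (pi i)) ->
  (forall N, exists2 i, N <= i & p (pi i) = q) -> winsp (odd q) pi.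
Proof.
move=> ge inf; case oq: (odd q) => /=.
  by exists q; split => //; exists 0.
move=> [q' [oq' inf' [M ev]]].
have [i le1 e1] := inf M; have := ev _ le1; rewrite e1 => le'.
have [j _ e2] := inf' 0; have := ge j; rewrite e2 => le''.
have eq : q = q' by apply/eqP; rewrite eqn_leq le' le''.
by move: oq; rewrite eq oq'.
Qed.

Definition astep b (U X : {set V}) : {set V} :=
  X :|: [set x in U | if own b x then [exists y, [&& y \in U, E x y & y \in X]]
                      else [forall y, ((y \in U) && E x y) ==> (y \in X)]].
Definition aiter b U T j := iter j (astep b U) T.
Definition attr b U T := aiter b U T #|V|.

Lemma astep_ext b U (Y : {set V}) : Y \subset astep b U Y.
Proof. exact: subsetUl. Qed.

Lemma aiter_mono b U T i j : i <= j -> aiter b U T i \subset aiter b U T j.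
Proof. by apply: it_mono => Y; apply: astep_ext. Qed.

Lemma aiter_attr b U T j : aiter b U T j \subset attr b U T.
Proof. by apply: it_sub => Y; apply: astep_ext. Qed.

Lemma attr_fix b U T : astep b U (attr b U T) = attr b U T.
Proof. by apply: it_fix => Y; apply: astep_ext. Qed.

Lemma aiter_sub b U T j : T \subset U -> aiter b U T j \subset U.
Proof.
move=> TU; elim: j => [|j IH] //=.
by apply/subsetP => x; rewrite inE => /orP [/(subsetP IH)//|]; rewrite inE => /andP[].
Qed.

Lemma attr_sub b U T : T \subset U -> attr b U T \subset U.
Proof. exact: aiter_sub. Qed.

Lemma T_attr b U T : T \subset attr b U T.
Proof. by have := aiter_attr b U T 0. Qed.

Lemma attr_trap b U T x : x \in U -> x \notin attr b U T ->
  (own b x -> forall y, y \in U -> E x y -> y \notin attr b U T) /\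
  (~~ own b x -> exists y, [/\ y \in U, E x y & y \notin attr b U T]).
Proof.
move=> xU xA; have : x \notin astep b U (attr b U T) by rewrite attr_fix.
rewrite !inE negb_or xU /= => /andP [_]; case o: (own b x) => H; split => // _.
  by move=> y yU exy; apply/negP => yA; move: H; rewrite negb_exists => /forallP /(_ y); rewrite yU exy yA.
move: H; rewrite negb_forall => /existsP [y]; rewrite negb_imply => /andP [/andP [yU exy] yA].
by exists y.
Qed.

Lemma aiter_spec b U T j x : x \in aiter b U T j.+1 -> x \in T \/
  ((own b x -> exists y, [/\ y \in U, E x y & y \in aiter b U T j]) /\
   (~~ own b x -> forall y, y \in U -> E x y -> y \in aiter b U T j)).
Proof.
elim: j x => [|j IH] x.
  rewrite /= in_setU in_set => /orP [->|/andP [xU]]; first by left.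
  case o: (own b x) => H; right; split => // _.
    by have /existsP [y /and3P [? ? ?]] := H; exists y.
  by move=> y yU exy; have /forallP /(_ y) := H; rewrite yU exy.
have -> : aiter b U T j.+2 = astep b U (aiter b U T j.+1) by [].
rewrite {1}/astep in_setU in_set => /orP [xin|/andP [xU]].
  have [|[h1 h2]] := IH x xin; first by left.
  right; split.
    by move=> o; have [y [? ? ?]] := h1 o; exists y; split => //; apply: (subsetP (astep_ext _ _ _)).
  by move=> o y yU exy; apply: (subsetP (astep_ext _ _ _)); apply: h2.
case o: (own b x) => H; right; split => // _.
  by have /existsP [y /and3P [? ? ?]] := H; exists y.
by move=> y yU exy; have /forallP /(_ y) := H; rewrite yU exy.
Qed.

Lemma attr_strat b U T : exists a : V -> V, forall x,
  x \in attr b U T -> x \notin T -> own b x ->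
  [/\ a x \in U, E x (a x) & forall j, x \in aiter b U T j.+1 -> a x \in aiter b U T j].
Proof.
apply: (@fchoice V V (fun x y => x \in attr b U T -> x \notin T -> own b x ->
  [/\ y \in U, E x y & forall j, x \in aiter b U T j.+1 -> y \in aiter b U T j])) => x.
case: (classic (x \in attr b U T /\ x \notin T /\ own b x)); last first.
  by move=> H; exists x => h1 h2 h3; case: H.
move=> [xA [xT o]].
have ex : exists j, x \in aiter b U T j.+1.
  move: xA; rewrite /attr; case: #|V| => [|m] /=; first by rewrite (negbTE xT).
  by exists m.
case: (ex_minnP ex) => j0 xj0 mn.
have [|[h1 _]] := aiter_spec xj0; first by rewrite (negbTE xT).
have [y [yU exy yj]] := h1 o; exists y => _ _ _; split => // j xj.
by apply: (subsetP (aiter_mono _ _ _ (mn _ xj))).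
Qed.

Lemma reach b U T s a pi :
  (forall x, x \in attr b U T -> x \notin T -> own b x ->
     [/\ a x \in U, E x (a x) & forall j, x \in aiter b U T j.+1 -> a x \in aiter b U T j]) ->
  (forall x, x \in attr b U T -> x \notin T -> own b x -> s x = a x) ->
  play_in U pi -> cons_b b s pi ->
  forall j i, pi i \in aiter b U T j -> exists2 i', i <= i' & pi i' \in T.
Proof.
move=> ha hs pl co; elim=> [|j IH] i pij; first by exists i.
case xT: (pi i \in T); first by exists i.
have [|[h1 h2]] := aiter_spec pij; first by rewrite xT.
have nxt : pi i.+1 \in aiter b U T j.
  case o: (own b (pi i)).
    have xA : pi i \in attr b U T by move: pij; apply: subsetP; apply: aiter_attr.
    rewrite (co _ o) (hs _ xA (negbT xT) o).
    by have [_ _ ] := ha _ xA (negbT xT) o; apply.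
  by apply: h2; [rewrite o | case: (pl i.+1) | case: (pl i)].
by have [i' le h] := IH _ nxt; exists i' => //; apply: ltnW.
Qed.

End Game.


Section Zl.
Variables (V : finType) (E : rel V) (p : V -> nat) (VO : {set V}).
Implicit Types (U T X Y : {set V}) (b : bool) (x y : V) (pi : nat -> V) (a : V -> V).
Local Notation own := (own VO).
Local Notation closedb := (closedb E VO).
Local Notation winsb := (winsb E p VO).
Local Notation play_in := (play_in E).
Local Notation cons_b := (cons_b VO).
Local Notation winsp := (winsp p).
Local Notation attr := (attr E VO).
Local Notation aiter := (aiter E VO).
Local Notation totalU := (totalU E).

Definition zspec U (W : bool -> {set V}) (s : bool -> V -> V) :=
  [/\ forall x, (x \in U) = (x \in W false) || (x \in W true),
      forall x, x \in W false -> x \notin W true &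
      forall b, closedb b U (W b) (s b) /\ winsb b U (W b) (s b)].

Lemma part_build U (W : bool -> {set V}) b :
  (forall x, (x \in U) = (x \in W b) || (x \in W (~~ b))) ->
  (forall x, x \in W b -> x \notin W (~~ b)) ->
  (forall x, (x \in U) = (x \in W false) || (x \in W true)) /\
  (forall x, x \in W false -> x \notin W true).
Proof.
case: b => /= h1 h2; split => // x; first by rewrite h1 orbC.
by apply: contraTN => /h2.
Qed.

Lemma part_use U (W : bool -> {set V}) (s : bool -> V -> V) : zspec U W s -> forall c x,
  (x \in U) = (x \in W c) || (x \in W (~~ c)) /\ (x \in W c -> x \notin W (~~ c)).
Proof.
case=> h1 h2 _ [] x /=; split => //.
- by rewrite h1 orbC.
- by apply: contraTN => /h2.
- exact: h2.
Qed.

Lemma bool_split c b : c = b \/ c = ~~ b.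
Proof. by case: c; case: b; auto. Qed.

Lemma zspec0 : zspec set0 (fun _ => set0) (fun _ x => x).
Proof. by split => [x|x|b]; rewrite ?inE //; split => [x|pi _ _]; rewrite inE. Qed.

Lemma trap_own b U T x y : x \in U -> x \notin attr b U T -> own b x ->
  y \in U -> E x y -> y \notin attr b U T.
Proof. by move=> xU xA o; case: (attr_trap xU xA) => h _; apply: h. Qed.

Lemma zielonka_n n : forall U, #|U| <= n -> totalU U -> exists W s, zspec U W s.
Proof.
elim: n => [|n IH] U cU tot.
  have -> : U = set0 by apply/eqP; rewrite -cards_eq0 -leqn0.
  by exists (fun _ => set0), (fun _ x => x); apply: zspec0.
case: (boolP (U == set0)) => [/eqP -> | neU].
  by exists (fun _ => set0), (fun _ x => x); apply: zspec0.
case/set0Pn: neU => x0 x0U.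
have ex : exists q, [exists x in U, p x == q].
  by exists (p x0); apply/existsP; exists x0; rewrite x0U eqxx.
case: (ex_minnP ex) => q /existsP [xq /andP [xqU /eqP pxq]] qmin.
have qle : forall x, x \in U -> q <= p x.
  by move=> x xU; apply: qmin; apply/existsP; exists x; rewrite xU eqxx.
set b := odd q.
set T := [set x in U | p x == q].
have TU : T \subset U by apply/subsetP => x; rewrite inE => /andP [].
set A := attr b U T.
have AU : A \subset U by apply: attr_sub.
set U' := U :\: A.
have xqA : xq \in A by apply: (subsetP (T_attr E VO b U T)); rewrite inE xqU pxq eqxx.
have cU' : #|U'| <= n.
  have pr : U' \proper U.
    apply/properP; split; first exact: subsetDl.
    by exists xq => //; rewrite inE xqA.
  by rewrite -ltnS; apply: leq_trans (proper_card pr) cU.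
have [nx hnx] : exists nx : V -> V, forall x, x \in U -> nx x \in U /\ E x (nx x).
  apply: (@fchoice V V (fun x y => x \in U -> y \in U /\ E x y)) => x.
  case: (boolP (x \in U)) => xU; last by exists x.
  by have [y ? ?] := tot _ xU; exists y.
have tot' : totalU U'.
  move=> x; rewrite inE => /andP [xA xU].
  case o: (own b x).
    have [hU hE] := hnx _ xU; exists (nx x) => //.
    by rewrite inE hU andbT; apply: (trap_own xU xA o).
  have [_ h] := attr_trap xU xA; have [y [yU exy yA]] := h (negbT o).
  by exists y => //; rewrite inE yA yU.
have [W' [s' zs']] := IH _ cU' tot'.
have [part' disj' ws'] := zs'.
have W'U' : forall c x, x \in W' c -> x \in U'.
  by move=> c x h; case: c h => h; rewrite part' h ?orbT.
have [a ha] := attr_strat E VO b U T.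
case: (boolP (W' (~~ b) == set0)) => [/eqP e0 | ne0].
  have W'b : forall x, (x \in U') = (x \in W' b).
    by move=> x; have [-> _] := part_use zs' b x; rewrite e0 inE orbF.
  pose Wf := fun c => if c == b then U else set0.
  exists Wf.
  exists (fun _ x => if x \in A then (if x \in T then nx x else a x) else s' b x).
  have nbb : (~~ b == b) = false by case: (b).
  have H1 : forall x, (x \in U) = (x \in Wf b) || (x \in Wf (~~ b)).
    by move=> x; rewrite /Wf eqxx nbb inE orbF.
  have H2 : forall x, x \in Wf b -> x \notin Wf (~~ b) by move=> x _; rewrite /Wf nbb inE.
  have [h1 h2] := part_build H1 H2.
  split => // c; rewrite /Wf; case: (bool_split c b) => ->; last first.
    by rewrite nbb; split => [x|pi _ _]; rewrite inE.
  rewrite eqxx; split.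
    move=> x xU; split => // o.
    case: (boolP (x \in A)) => xA.
      case: (boolP (x \in T)) => xT; first by have [? ?] := hnx _ xU.
      by have [? ? _] := ha _ xA xT o.
    have xU' : x \in W' b by rewrite -W'b inE xA xU.
    have [h _] := ws' b; have [h3 h4] := (h _ xU').1 o.
    by split => //; apply: (subsetP (subsetDl U A)); rewrite W'b.
  move=> pi pl co p0.
  case: (classic (forall N, exists2 i, N <= i & pi i \in A)) => [inf | fin].
    rewrite /b; apply: min_wins; first by move=> i; apply: qle; case: (pl i).
    move=> N; have [i le iA] := inf N.
    have [i' le' i'T] := reach (s := fun x => if x \in A then (if x \in T then nx x else a x) else s' b x) ha
      (fun x xA xT _ => ltac:(by have xA' : x \in A := xA; rewrite /= xA' (negbTE xT))) pl co iA.
    by exists i'; [apply: leq_trans le le' | move: i'T; rewrite inE => /andP [_ /eqP]].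
  have [N hN] : exists N, forall i, N <= i -> pi i \notin A.
    apply: NNPP => H; apply: fin => N; apply: NNPP => H3; apply: H; exists N => i le.
    by apply/negP => iA; apply: H3; exists i.
  apply: (proj1 (winsp_shift _ _ _ N)).
  have [_ w] := ws' b; apply: w.
  - move=> i; rewrite /shift; have [pU pE] := pl (N + i); split; rewrite ?addnS //.
    by rewrite inE pU hN // leq_addr.
  - move=> i o; rewrite /shift addnS (co _ o) (negbTE (hN _ (leq_addr _ _))) //.
  - by rewrite /shift addn0 -W'b inE hN // (pl N).1.
case/set0Pn: ne0 => x1 x1W'.
have W'U : W' (~~ b) \subset U.
  by apply/subsetP => x /(W'U' _ _); rewrite inE => /andP [].
set B := attr (~~ b) U (W' (~~ b)).
have BU : B \subset U by apply: attr_sub.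
have W'B : W' (~~ b) \subset B by apply: T_attr.
set U'' := U :\: B.
have cU'' : #|U''| <= n.
  have pr : U'' \proper U.
    apply/properP; split; first exact: subsetDl.
    by exists x1; [apply: (subsetP W'U) | rewrite inE (subsetP W'B)].
  by rewrite -ltnS; apply: leq_trans (proper_card pr) cU.
have tot'' : totalU U''.
  move=> x; rewrite inE => /andP [xB xU].
  case o: (own (~~ b) x).
    have [hU hE] := hnx _ xU; exists (nx x) => //.
    by rewrite inE hU andbT; apply: (trap_own xU xB o).
  have [_ h] := attr_trap xU xB; have [y [yU exy yB]] := h (negbT o).
  by exists y => //; rewrite inE yB yU.
have [W'' [s'' zs'']] := IH _ cU'' tot''.
have [part'' disj'' ws''] := zs''.
have W''U'' : forall c x, x \in W'' c -> x \in U''.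
  by move=> c x h; case: c h => h; rewrite part'' h ?orbT.
have [a2 ha2] := attr_strat E VO (~~ b) U (W' (~~ b)).
set sN := fun x => if x \in W' (~~ b) then s' (~~ b) x else if x \in B then a2 x else s'' (~~ b) x.
have nbb : (~~ b == b) = false by case: (b).
pose Wf := fun c => if c == b then W'' b else W'' (~~ b) :|: B.
exists Wf.
exists (fun c => if c == b then s'' b else sN).
have H1 : forall x, (x \in U) = (x \in Wf b) || (x \in Wf (~~ b)).
  move=> x; rewrite /Wf eqxx nbb inE.
  case: (boolP (x \in B)) => xB; first by rewrite !orbT (subsetP BU x xB).
  have e := (part_use zs'' b x).1.
  by rewrite orbF -e inE xB.
have H2 : forall x, x \in Wf b -> x \notin Wf (~~ b).
  move=> x; rewrite /Wf eqxx nbb inE negb_or => xW; rewrite (part_use zs'' b x).2 //=.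
  by have := W''U'' _ _ xW; rewrite inE => /andP [].
have [h1 h2] := part_build H1 H2.
split => // c; rewrite /Wf; case: (bool_split c b) => ->.
  rewrite eqxx; have [cl w] := ws'' b.
  have cl2 : closedb b U (W'' b) (s'' b).
    move=> x xW; have [h3 h4] := cl _ xW; split => // o y yU exy.
    apply: h4 => //; rewrite inE yU andbT.
    have := W''U'' _ _ xW; rewrite inE => /andP [xB xU].
    by apply: (trap_own xU xB) => //; rewrite ownN o.
  split => // pi pl co p0; apply: w => //.
  move=> i; have := stay cl2 pl co p0 i => iW; split; last by case: (pl i).
  exact: W''U'' iW.
rewrite nbb.
have [[cl' w'] _] := (ws' (~~ b), tt).
have clW' : closedb (~~ b) U (W' (~~ b)) sN.
  move=> x xW; have [h3 h4] := cl' _ xW; split.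
    by move=> o; rewrite /sN xW; apply: h3.
  move=> o y yU exy; apply: h4 => //.
  have := W'U' _ _ xW; rewrite inE => /andP [xA xU].
  by rewrite inE yU andbT; apply: (trap_own xU xA) => //; move: o; rewrite ownN negbK.
have [cl3 w3] := ws'' (~~ b).
have clF : closedb (~~ b) U (W'' (~~ b) :|: B) sN.
  move=> x; rewrite inE => xin.
  case: (boolP (x \in W' (~~ b))) => xW'.
    have [h3 h4] := clW' _ xW'; split.
      by move=> o; have [? ?] := h3 o; split => //; rewrite inE (subsetP W'B) ?orbT.
    by move=> o y yU exy; rewrite inE (subsetP W'B) ?orbT //; apply: h4.
  case: (boolP (x \in B)) => xB.
    have xBm : x \in aiter (~~ b) U (W' (~~ b)) #|V| by [].
    move: xBm; case e: #|V| => [|m] xBm.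
      by move: xBm; rewrite /aiter /= (negbTE xW').
    have [|[h3 h4]] := aiter_spec xBm; first by rewrite (negbTE xW').
    split.
      move=> o; have [? ? hj] := ha2 _ xB xW' o.
      rewrite /sN (negbTE xW') xB; split => //; rewrite inE; apply/orP; right.
      by move: (hj _ xBm); apply: subsetP; rewrite /B /attr e; apply: aiter_mono.
    move=> o y yU exy; rewrite inE; apply/orP; right.
    by move: (h4 o y yU exy); apply: subsetP; rewrite /B /attr e; apply: aiter_mono.
  have xW'' : x \in W'' (~~ b) by move: xin; rewrite (negbTE xB) orbF.
  have [h3 h4] := cl3 _ xW''; split.
    by move=> o; rewrite /sN (negbTE xW') (negbTE xB); have [? ?] := h3 o; rewrite inE; split => //; apply/orP; left.
  move=> o y yU exy; rewrite inE; case: (boolP (y \in B)) => yB; rewrite ?orbT //.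
  by rewrite orbF; apply: h4 => //; rewrite inE yB yU.
split => // pi pl co p0.
have stF := stay clF pl co p0.
case: (classic (exists N, pi N \in W' (~~ b))) => [[N hN] | nev].
  apply: (proj1 (winsp_shift _ _ _ N)).
  have plS := play_shift N pl; have coS := cons_shift (N := N) co.
  have s0 : shift pi N 0 \in W' (~~ b) by rewrite /shift addn0.
  have st := stay clW' plS coS s0.
  apply: w' => //.
  - move=> i; split; first exact (W'U' _ _ (st i)).
    by case: (plS i).
  - by move=> i o; rewrite (coS _ o) /sN st.
have nB : forall i, pi i \notin B.
  move=> i; apply/negP => iB.
  have [i' _ h] := reach (s := sN) ha2
    (fun x xB xT _ => ltac:(by rewrite /sN (negbTE xT) xB)) pl co (j := #|V|) (i := i) iB.
  by apply: nev; exists i'.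
apply: w3.
- move=> i; split; last by case: (pl i).
  by have := stF i; rewrite inE (negbTE (nB i)) orbF => /W''U''.
- move=> i o; rewrite (co _ o) /sN (negbTE (nB i)).
  case: (boolP (pi i \in W' (~~ b))) => // h; by case: nev; exists i.
- by move: p0; rewrite inE (negbTE (nB 0)) orbF.
Qed.

Theorem zielonka U : totalU U -> exists W s, zspec U W s.
Proof. exact: (@zielonka_n #|U| U (leqnn _)). Qed.

End Zl.


Section Lex.
Implicit Types (s t u : seq nat).

Lemma lexle_refl s : lexle s s.
Proof. by elim: s => //= x s ->; rewrite eqxx orbT. Qed.

Lemma lexle_trans s t u : lexle s t -> lexle t u -> lexle s u.
Proof.
elim: s t u => [|x s IH] [|y t] [|z u] //=.
case/orP => [lxy|/andP [/eqP <- st]] /orP [lyz|/andP [/eqP <- tu]].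
- by rewrite (ltn_trans lxy lyz).
- by rewrite lxy.
- by rewrite lyz.
- by rewrite eqxx (IH _ _ st tu) orbT.
Qed.

Lemma lexlt_le s t : lexlt s t -> lexle s t.
Proof.
elim: s t => [|x s IH] [|y t] //= /orP [->//|/andP [-> /IH ->]].
by rewrite orbT.
Qed.

Lemma lexle_lt_trans s t u : size s = size t -> lexle s t -> lexlt t u -> lexlt s u.
Proof.
elim: s t u => [|x s IH] [|y t] [|z u] //= [e].
case/orP => [lxy|/andP [/eqP <- st]] /orP [lyz|/andP [/eqP <- tu]].
- by rewrite (ltn_trans lxy lyz).
- by rewrite lxy.
- by rewrite lyz.
- by rewrite eqxx (IH _ _ e st tu) orbT.
Qed.

Lemma lexlt_le_trans s t u : lexlt s t -> lexle t u -> lexlt s u.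
Proof.
elim: s t u => [|x s IH] [|y t] [|z u] //=.
case/orP => [lxy|/andP [/eqP <- st]] /orP [lyz|/andP [/eqP <- tu]].
- by rewrite (ltn_trans lxy lyz).
- by rewrite lxy.
- by rewrite lyz.
- by rewrite eqxx (IH _ _ st tu) orbT.
Qed.

Lemma lexle_anti s t : size s = size t -> lexle s t -> lexle t s -> s = t.
Proof.
elim: s t => [|x s IH] [|y t] //= [e] /orP [lxy|/andP [/eqP exy st]] /orP [lyx|/andP [/eqP eyx ts]].
- by move: (ltn_trans lxy lyx); rewrite ltnn.
- by move: lxy; rewrite eyx ltnn.
- by move: lyx; rewrite exy ltnn.
- by rewrite exy (IH _ e st ts).
Qed.

Lemma lexle_total s t : size s = size t -> lexle s t || lexle t s.
Proof.
elim: s t => [|x s IH] [|y t] //= [e].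
have [lt|gt|exy] := ltngtP x y => /=; [done | done | exact: IH].
Qed.

Lemma lexle_take i s t : lexle s t -> lexle (take i s) (take i t).
Proof.
elim: i s t => [|i IH] [|x s] [|y t] //=.
by case/orP => [->//|/andP [-> /(IH _ _) ->]]; rewrite orbT.
Qed.

Lemma lexle_cw s t : size s = size t -> (forall i, nth 0 s i <= nth 0 t i) -> lexle s t.
Proof.
elim: s t => [|x s IH] [|y t] //= [e] H.
have := H 0 => /=; rewrite leq_eqVlt => /orP [/eqP ->|->//].
by rewrite eqxx IH ?orbT // => i; apply: (H i.+1).
Qed.

Lemma lexlt_cw s t : size s = size t -> (forall i, nth 0 s i <= nth 0 t i) ->
  (exists i, nth 0 s i < nth 0 t i) -> lexlt s t.
Proof.
elim: s t => [|x s IH] t.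
  by case: t => //= _ _ [i]; rewrite nth_nil.
case: t => [|y t] //= [e] H [i hi].
have := H 0 => /=; rewrite leq_eqVlt => /orP [/eqP exy|->//].
rewrite exy eqxx IH ?orbT //; first by move=> j; apply: (H j.+1).
by case: i hi => [|i] /= hi; [move: hi; rewrite exy ltnn | exists i].
Qed.

End Lex.

Definition condv q (a m : meas) : bool :=
  if odd q then mlt_i q a m || (is_top m && is_top a) else mle_i q a m.

Section Meas.
Variables (V : finType) (p : V -> nat).
Implicit Types (a b c m : meas) (s t u : seq nat).

Definition sizeM m := if m is Tup s then size s == dim p else true.

Lemma inM_size m : inM p m -> sizeM m.
Proof. by case: m => //= s /andP []. Qed.

Lemma inM_nth s i : inM p (Tup s) -> nth 0 s i <= (if odd i then #|Vpr p i| else 0).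
Proof.
move=> /andP [/eqP sz /allP H].
case: (ltnP i (dim p)) => lt; last by rewrite nth_default // sz.
have := H i; rewrite mem_iota add0n lt => /(_ isT).
by case: (odd i) => // /eqP ->.
Qed.

Lemma mle_refl a : mle a a.
Proof. by case: a => //= s; apply: lexle_refl. Qed.

Lemma mle_trans a b c : mle a b -> mle b c -> mle a c.
Proof. by case: a; case: b; case: c => //= ? ? ?; apply: lexle_trans. Qed.

Lemma mle_total a b : inM p a -> inM p b -> mle a b || mle b a.
Proof.
case: a; case: b => //= s t /andP [/eqP e1 _] /andP [/eqP e2 _].
by apply: lexle_total; rewrite e1 e2.
Qed.

Lemma mle_anti a b : inM p a -> inM p b -> mle a b -> mle b a -> a = b.
Proof.
case: a; case: b => //= s t /andP [/eqP e1 _] /andP [/eqP e2 _] h1 h2.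
by rewrite (lexle_anti _ h1 h2) // e1 e2.
Qed.

Lemma mle_i_of q a b : mle a b -> mle_i q a b.
Proof. by case: a; case: b => //= s t; apply: lexle_take. Qed.

Lemma size_take_dim s q : size s = dim p -> size (take q s) = minn q (dim p).
Proof. by move=> e; rewrite size_take e /minn; case: ltnP. Qed.

Lemma mle_mlt_i q a b c : inM p a -> inM p b -> mle_i q a b -> mlt_i q b c -> mlt_i q a c.
Proof.
case: a; case: b; case: c => //= u t s /andP [/eqP e1 _] /andP [/eqP e2 _].
by apply: lexle_lt_trans; rewrite !size_take_dim.
Qed.

Lemma mlt_le_i q a b c : mlt_i q a b -> mle_i q b c -> mlt_i q a c.
Proof. by case: a; case: b; case: c => //= u t s; apply: lexlt_le_trans. Qed.

Lemma mle_i_trans q a b c : mle_i q a b -> mle_i q b c -> mle_i q a c.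
Proof. by case: a; case: b; case: c => //= u t s; apply: lexle_trans. Qed.

Lemma condv_mono q a b m : inM p a -> inM p b -> mle a b -> condv q b m -> condv q a m.
Proof.
move=> ia ib ab; rewrite /condv; case: (odd q).
  case/orP => [h|/andP [tm tb]].
    by rewrite (mle_mlt_i ia ib (mle_i_of q ab) h).
  move: ia ib ab tb; case: b => [t|]; case: a => [s|] //= _ _ _ _.
    by case: m tm.
  by case: m tm; rewrite /= ?orbT.
by move=> h; apply: mle_i_trans (mle_i_of q ab) h.
Qed.

Definition mmaxT := mmax.

Lemma mmax_cases a b : mmax a b = a \/ mmax a b = b.
Proof. by rewrite /mmax; case: (mle a b); auto. Qed.

Lemma mmax_le a b c : mle a c -> mle b c -> mle (mmax a b) c.
Proof. by rewrite /mmax; case: (mle a b). Qed.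

Lemma mmax_ge a b : mle a (mmax a b).
Proof. by rewrite /mmax; case e: (mle a b) => //; apply: mle_refl. Qed.

Fixpoint tups (d B : nat) : seq (seq nat) :=
  if d is d'.+1 then flatten [seq [seq x :: t | t <- tups d' B] | x <- iota 0 B.+1]
  else [:: [::]].

Lemma tups_complete B s : all (fun x => x <= B) s -> s \in tups (size s) B.
Proof.
elim: s => [|x s IH] // /andP [xB /IH h].
change (x :: s \in flatten [seq [seq y :: t | t <- tups (size s) B] | y <- iota 0 B.+1]).
apply/flattenP; exists [seq x :: t | t <- tups (size s) B].
  by apply/mapP; exists x => //; rewrite mem_iota add0n ltnS xB.
by apply/mapP; exists s.
Qed.

Lemma mem_In (T : eqType) (x : T) (s : seq T) : x \in s -> List.In x s.
Proof. elim: s => //= y s IH; rewrite in_cons => /orP [/eqP ->|/IH]; auto. Qed.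

Definition allM : seq meas := Top :: map Tup (tups (dim p) #|V|).

Lemma inM_allM m : inM p m -> List.In m allM.
Proof.
case: m => [s|]; last by left.
move=> ism; rewrite /allM; right; apply: List.in_map; apply: mem_In.
have /eqP sz := inM_size ism; rewrite -sz; apply: tups_complete.
apply/allP => x xs; have [i li <-] : exists2 i, i < size s & nth 0 s i = x.
  by exists (index x s); [rewrite index_mem | rewrite nth_index].
have := inM_nth i ism; case: (odd i) => h; last by apply: leq_trans h _.
by apply: leq_trans h (max_card _).
Qed.
End Meas.


Lemma least_list (T : Type) (le : T -> T -> bool) (P : T -> bool) (l : list T) :
  (forall x y, P x -> P y -> le x y || le y x) ->
  (forall x y z, P x -> P y -> P z -> le x y -> le y z -> le x z) ->
  (forall x, P x -> le x x) ->
  (exists x, List.In x l /\ P x) ->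
  exists x, [/\ P x, List.In x l & forall y, List.In y l -> P y -> le x y].
Proof.
move=> tot tr rf; elim: l => [|a l IH] [x [ix px]]; first by [].
case: (classic (exists y, List.In y l /\ P y)) => [ex|nex].
  have [m [pm im hm]] := IH ex.
  case pa: (P a); last first.
    exists m; split => //; first by right.
    by move=> y [<-|iy] py; [rewrite pa in py | apply: hm].
  case: (boolP (le a m)) => lam.
    exists a; split => //; first by left.
    move=> y [<-|iy] py; first by apply: rf.
    by apply: tr lam (hm _ iy py).
  exists m; split => //; first by right.
  move=> y [<-|iy] py; last by apply: hm.
  by have := tot _ _ pa pm; rewrite (negbTE lam).
case: ix => [eax|ix]; last by case: nex; exists x.
subst x; exists a; split => //; first by left.
by move=> y [<-|iy] py; [apply: rf | case: nex; exists y].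
Qed.

Section Prog.
Variables (V : finType) (p : V -> nat).
Implicit Types (a b c m : meas) (s t u : seq nat).

Lemma prog_cond_condv (rho : V -> meas) x w m :
  prog_cond p rho x w m = condv (p x) (rho w) m.
Proof. by []. Qed.

Lemma prog_exists (rho : V -> meas) x w : exists m, is_prog p rho x w m.
Proof.
pose P := fun m => inM p m && prog_cond p rho x w m.
have t1 : forall a b, P a -> P b -> mle a b || mle b a.
  by move=> a b; rewrite /P => /andP [ia _] /andP [ib _]; exact: (mle_total ia ib).
have t2 : forall a b c, P a -> P b -> P c -> mle a b -> mle b c -> mle a c.
  by move=> a b c _ _ _; apply: mle_trans.
have t3 : forall a, P a -> mle a a by move=> a _; apply: mle_refl.
have t4 : exists a, List.In a (allM p) /\ P a.
  exists Top; split; first by left.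
  by rewrite /P /prog_cond /=; case: (odd (p x)); case: (rho w).
have [m [/andP [im cm] _ hm]] := least_list t1 t2 t3 t4.
exists m; split => // m' im' cm'.
by apply: hm; [apply: inM_allM | rewrite /P im' cm'].
Qed.

Lemma prog_mono (rho rho' : V -> meas) x w m m' :
  is_prog p rho x w m -> is_prog p rho' x w m' ->
  inM p (rho w) -> inM p (rho' w) -> mle (rho w) (rho' w) -> mle m m'.
Proof.
move=> [im cm hm] [im' cm' hm'] i1 i2 le; apply: hm => //.
by rewrite prog_cond_condv; apply: (condv_mono i1 i2 le); rewrite -prog_cond_condv.
Qed.

Definition ztrunc q s := take q.+1 s ++ nseq (size s - q.+1) 0.

Lemma ztrunc_size q s : size (ztrunc q s) = size s.
Proof.
rewrite /ztrunc size_cat size_take size_nseq.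
by case: ltnP => h; [rewrite subnKC // ltnW | move: h; rewrite -subn_eq0 => /eqP ->; rewrite addn0].
Qed.

Lemma ztrunc_nth q s i : nth 0 (ztrunc q s) i = if i <= q then nth 0 s i else 0.
Proof.
rewrite /ztrunc nth_cat size_take.
case: (ltnP q.+1 (size s)) => hs.
  case: (ltnP i q.+1) => hi.
    by rewrite nth_take //; have -> : i <= q by rewrite -ltnS.
  by rewrite nth_nseq if_same leqNgt hi.
case: (ltnP i (size s)) => hi.
  have hq : i <= q by rewrite -ltnS (leq_trans hi hs).
  by rewrite nth_take ?hq // ltnS.
by rewrite nth_nseq if_same; case: (i <= q) => //; rewrite nth_default.
Qed.

Lemma ztrunc_take q s : take q.+1 (ztrunc q s) = take q.+1 s.
Proof.
rewrite /ztrunc; case: (ltnP q.+1 (size s)) => hs.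
  by rewrite take_cat (size_takel (ltnW hs)) ltnn subnn take0 cats0.
have -> : size s - q.+1 = 0 by apply/eqP; rewrite subn_eq0.
by rewrite /= cats0 (take_oversize hs) take_oversize.
Qed.

Lemma ztrunc_inM q s : inM p (Tup s) -> inM p (Tup (ztrunc q s)).
Proof.
move=> ism; have /andP [/eqP sz _] := ism.
apply/andP; split; first by rewrite ztrunc_size sz.
apply/allP => i _.
have := inM_nth i ism; rewrite ztrunc_nth; case: (i <= q); case: (odd i) => //.
by rewrite leqn0.
Qed.

Lemma prog_ztail (rho : V -> meas) x w s :
  is_prog p rho x w (Tup s) -> forall i, p x < i -> nth 0 s i = 0.
Proof.
move=> [ism cs hm] i lt.
have iz := ztrunc_inM (p x) ism.
have cz : prog_cond p rho x w (Tup (ztrunc (p x) s)).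
  move: cs; rewrite !prog_cond_condv /condv; case: (odd (p x)).
    by case: (rho w) => //= t; rewrite ztrunc_take.
  by case: (rho w) => //= t; rewrite ztrunc_take.
have h1 := hm _ iz cz.
have /andP [/eqP sz _] := ism.
have h2 : lexle (ztrunc (p x) s) s.
  apply: lexle_cw; first by rewrite ztrunc_size.
  by move=> j; rewrite ztrunc_nth; case: (j <= p x).
have e := lexle_anti (esym (ztrunc_size (p x) s)) h1 h2.
by rewrite e ztrunc_nth leqNgt lt.
Qed.

End Prog.

Section Lifting.
Variables (V : finType) (E : rel V) (p : V -> nat) (VO : {set V}).
Variables (rhos : nat -> V -> meas) (vs : nat -> V) (n : nat).
Hypothesis ls : lifting_seq E p VO rhos vs n.

Lemma lift_at j : j < n ->
  (forall u, u != vs j -> rhos j.+1 u = rhos j u) /\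
  exists X, [/\ (if vs j \in VO then is_max (prog_val E p (rhos j) (vs j)) X
                 else is_min (prog_val E p (rhos j) (vs j)) X),
               prog_val E p (rhos j) (vs j) X &
               rhos j.+1 (vs j) = mmax (rhos j (vs j)) X].
Proof.
move=> lt; have [[h1 [X [h2 h3]]] _] := ls.2 _ lt; split => //; exists X; split => //.
by case: (vs j \in VO) h2 => [[]|[]].
Qed.

Lemma lift_inM j : j <= n -> forall u, inM p (rhos j u).
Proof.
elim: j => [|j IH] lt u.
  rewrite ls.1; apply/andP; split; first by rewrite size_nseq.
  by apply/allP => i _; rewrite nth_nseq if_same; case: (odd i).
have [h1 [X [_ [w _ [iX _ _]] h3]]] := lift_at lt.
case: (eqVneq u (vs j)) => [->|ne]; last by rewrite h1 // IH // ltnW.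
by rewrite h3; case: (mmax_cases (rhos j (vs j)) X) => ->; [apply: IH; apply: ltnW|].
Qed.

Lemma lift_mono j : j < n -> forall u, mle (rhos j u) (rhos j.+1 u).
Proof.
move=> lt u; have [h1 [X [_ _ h3]]] := lift_at lt.
case: (eqVneq u (vs j)) => [->|ne]; last by rewrite h1 // mle_refl.
by rewrite h3 mmax_ge.
Qed.

Lemma lift_ztail j : j <= n -> forall u s, rhos j u = Tup s -> forall i, p u < i -> nth 0 s i = 0.
Proof.
elim: j => [|j IH] lt u s.
  by rewrite ls.1 => -[<-] [|i] _ //=; rewrite nth_nseq if_same.
have [h1 [X [_ [w _ pw] h3]]] := lift_at lt.
case: (eqVneq u (vs j)) => [->|ne]; last by rewrite h1 //; apply: IH; apply: ltnW.
rewrite h3; case: (mmax_cases (rhos j (vs j)) X) => ->; first by apply: IH; apply: ltnW.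
by move=> eX; rewrite eX in pw; apply: prog_ztail pw.
Qed.

End Lifting.


Definition bP (P : Prop) : bool := if excluded_middle_informative P then true else false.
Lemma bPP (P : Prop) : bP P <-> P.
Proof. by rewrite /bP; case: excluded_middle_informative. Qed.

Lemma nth_take0 n s i : nth 0 (take n s) i = if i < n then nth 0 s i else 0.
Proof.
case: (ltnP i n) => h; first by rewrite nth_take.
rewrite nth_default // size_take; case: (ltnP n (size s)) => // h2.
exact: leq_trans h2 h.
Qed.

Section Main.
Variables (V : finType) (E : rel V) (p : V -> nat) (VO : {set V}).
Variables (rhos : nat -> V -> meas) (vs : nat -> V) (n : nat) (v : V).
Hypotheses (ls : lifting_seq E p VO rhos vs n) (n0 : 0 < n) (vn : vs n.-1 = v)
  (top : rhos n v = Top) (ntop : forall j u, j < n -> rhos j u <> Top).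

Definition k := p v.
Definition Ek : rel V := fun x y => if p x < k then y == x else E x y.
Definition pk x := if p x < k then 0 else p x.

Lemma ownT x : own VO true x = (x \in VO).
Proof. by rewrite /own eqb_id. Qed.
Lemma ownF x : own VO false x = (x \notin VO).
Proof. by rewrite /own eqbF_neg. Qed.

Lemma Ek_E x y : k <= p x -> Ek x y = E x y.
Proof. by rewrite /Ek ltnNge => ->. Qed.
Lemma pk_p x : k <= p x -> pk x = p x.
Proof. by rewrite /pk ltnNge => ->. Qed.

Lemma p_dim x : p x < dim p.
Proof. by rewrite /dim ltnS; apply: (@leq_bigmax_cond _ predT). Qed.

Lemma last_lift : exists2 X, prog_val E p (rhos n.-1) v X /\
   (if v \in VO then is_max (prog_val E p (rhos n.-1) v) X
                 else is_min (prog_val E p (rhos n.-1) v) X) &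
   rhos n v = mmax (rhos n.-1 v) X /\ (forall u, u != v -> rhos n u = rhos n.-1 u).
Proof.
have lt : n.-1 < n by rewrite prednK.
have [h1 [X [h2 h3 h4]]] := lift_at ls lt.
rewrite vn prednK // in h1 h2 h3 h4.
by exists X.
Qed.

Lemma X_top : exists2 w, E v w & is_prog p (rhos n.-1) v w Top.
Proof.
have [X [[w ew pw] _] [h _]] := last_lift.
have lt : n.-1 < n by rewrite prednK.
case: (mmax_cases (rhos n.-1 v) X) => e; rewrite e in h.
  by case: (ntop (u := v) lt); rewrite -h.
by exists w => //; rewrite -top h.
Qed.

Lemma k_odd : odd k.
Proof.
have [w ew [_ _ hm]] := X_top.
have lt : n.-1 < n by rewrite prednK.
case e: (rhos n.-1 w) hm => [t|]; last by case: (ntop lt e).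
move=> hm; apply: negbNE; apply/negP => ko.
have it : inM p (Tup t) by rewrite -e; exact: (lift_inM ls (ltnW lt)).
have := hm _ (ztrunc_inM k it).
rewrite prog_cond_condv e /condv -/k (negbTE ko) /= ztrunc_take lexle_refl.
by move=> /(_ isT).
Qed.

Lemma k_pos : 0 < k.
Proof. by have := k_odd; case: k. Qed.

Variables (W : bool -> {set V}) (s : bool -> V -> V).
Hypothesis zs : zspec Ek pk VO setT W s.

Definition WE := W false.
Definition WO := W true.
Definition tau := s false.
Definition sig0 := s true.

Lemma part x : (x \in WE) || (x \in WO).
Proof. by case: zs => h _ _; rewrite -h inE. Qed.
Lemma disj x : x \in WE -> x \notin WO.
Proof. by case: zs => _ h _; apply: h. Qed.

Lemma clE x : x \in WE ->
  (x \notin VO -> Ek x (tau x) /\ tau x \in WE) /\ (x \in VO -> forall y, Ek x y -> y \in WE).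
Proof.
case: zs => _ _ /(_ false) [cl _] xW; have [h1 h2] := cl _ xW.
split; first by move=> o; apply: h1; rewrite ownF.
by move=> o y; apply: h2; rewrite ?ownF ?o ?inE.
Qed.

Lemma clO x : x \in WO ->
  (x \in VO -> Ek x (sig0 x) /\ sig0 x \in WO) /\ (x \notin VO -> forall y, Ek x y -> y \in WO).
Proof.
case: zs => _ _ /(_ true) [cl _] xW; have [h1 h2] := cl _ xW.
split; first by move=> o; apply: h1; rewrite ownT.
by move=> o y; apply: h2; rewrite ?ownT ?o ?inE.
Qed.

Lemma winE pi : (forall i, Ek (pi i) (pi i.+1)) ->
  (forall i, pi i \notin VO -> pi i.+1 = tau (pi i)) -> pi 0 \in WE -> ~ odd_wins pk pi.
Proof.
case: zs => _ _ /(_ false) [_ w] e c p0; apply: (w pi _ _ p0).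
  by move=> i; rewrite inE.
by move=> i; rewrite ownF; apply: c.
Qed.

Lemma winO pi : (forall i, Ek (pi i) (pi i.+1)) ->
  (forall i, pi i \in VO -> pi i.+1 = sig0 (pi i)) -> pi 0 \in WO -> odd_wins pk pi.
Proof.
case: zs => _ _ /(_ true) [_ w] e c p0; apply: (w pi _ _ p0).
  by move=> i; rewrite inE.
by move=> i; rewrite ownT; apply: c.
Qed.

Lemma sink_WE x : p x < k -> x \in WE.
Proof.
move=> lt; have := part x; case: (boolP (x \in WE)) => //= _ xO.
have ex : Ek x x by rewrite /Ek lt eqxx.
have := @winO (fun _ => x) (fun _ => ex).
case => //.
  move=> _ o; have [h _] := clO xO; have [e _] := h o.
  by move: e; rewrite /Ek lt => /eqP.
move=> q [oq inf _]; have [i _ e] := inf 0.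
by move: e oq; rewrite /pk lt => <-.
Qed.

Lemma WO_ge x : x \in WO -> k <= p x.
Proof.
move=> xO; rewrite leqNgt; apply/negP => lt.
by have := disj (sink_WE lt); rewrite xO.
Qed.

Definition R : rel V := fun x y => Ek x y && ((x \in VO) || (y == tau x)).

Lemma R_WE x y : x \in WE -> R x y -> y \in WE.
Proof.
move=> xW /andP [e /orP [o|/eqP ey]].
  by have [_ h] := clE xW; exact: h o _ e.
case: (boolP (x \in VO)) => o.
  by have [_ h] := clE xW; exact: h o _ e.
by have [h _] := clE xW; case: (h o); rewrite ey.
Qed.

Lemma path_WE x t : x \in WE -> path R x t -> forall z, z \in x :: t -> z \in WE.
Proof.
elim: t x => [|y t IH] x xW /=.
  by move=> _ z; rewrite inE => /eqP ->.
move=> /andP [r pt] z; rewrite inE => /orP [/eqP ->//|]; apply: IH => //.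
exact: R_WE r.
Qed.

Definition Pth i x c := exists t, [/\ path R x t, all (fun z => i <= pk z) (x :: t) &
   c <= count (fun z => pk z == i) (x :: t)].

Definition cnt i x := \max_(c < #|V|.+1 | bP (Pth i x c)) c.

Definition Bnd i := #|[set z in WE | pk z == i]|.

Section Lasso.
Variables (a b : nat).
Hypotheses (ab : a < b).
Fixpoint pos m := if m is m'.+1 then (if (pos m').+1 == b then a else (pos m').+1) else 0.

Lemma pos_lt m : pos m < b.
Proof.
elim: m => [|m IH] /=; first by apply: leq_ltn_trans ab.
by case: eqP => // ne; rewrite ltn_neqAle IH andbT; apply/eqP.
Qed.

Lemma pos_add m d : pos m + d < b -> pos (m + d) = pos m + d.
Proof.
elim: d => [|d IH]; first by rewrite !addn0.
move=> h; rewrite addnS /= IH; last by apply: ltnW; rewrite -addnS.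
by rewrite -addnS (ltn_eqF h).
Qed.

Lemma pos_hit m : pos (m + (b - pos m)) = a.
Proof.
have lt := pos_lt m.
have -> : b - pos m = (b - (pos m).+1).+1 by rewrite subnS prednK // subn_gt0.
rewrite addnS /= pos_add; last by lia.
have -> : (pos m + (b - (pos m).+1)).+1 = b by lia.
by rewrite eqxx.
Qed.
End Lasso.

Lemma pigeon i x t : odd i -> x \in WE -> path R x t ->
  all (fun z => i <= pk z) (x :: t) -> count (fun z => pk z == i) (x :: t) <= Bnd i.
Proof.
move=> oi xW pt al.
set l := x :: t.
have lW := path_WE xW pt.
set f := [seq j <- iota 0 (size l) | pk (nth x l j) == i].
have cf : count (fun z => pk z == i) l = size f.
  by rewrite size_filter -{1}(mkseq_nth x l) /mkseq count_map.
set g := map (nth x l) f.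
rewrite cf -(size_map (nth x l)) -/g.
case: (boolP (uniq g)) => ug.
  rewrite /Bnd cardE; apply: uniq_leq_size => // z /mapP [j jf ->].
  move: jf; rewrite mem_filter mem_iota add0n => /andP [pj lj].
  by rewrite mem_enum inE pj andbT; apply: lW; apply: mem_nth.
exfalso; have [a' [b' [ab' bg e]]] := uniqPn x ug.
have sf : sorted ltn f by apply: sorted_filter; [apply: ltn_trans | apply: iota_ltn_sorted].
have ag : a' < size f by rewrite -(size_map (nth x l)); apply: ltn_trans ab' bg.
have bg' : b' < size f by rewrite -(size_map (nth x l)).
set a := nth 0 f a'; set b := nth 0 f b'.
have ab : a < b by apply: (sorted_ltn_nth ltn_trans 0 sf).
have bf : b \in f by apply: mem_nth.
have af : a \in f by apply: mem_nth.
move: bf af; rewrite !mem_filter !mem_iota !add0n => /andP [pb bl] /andP [pa al'].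
have eab : nth x l a = nth x l b by move: e; rewrite !(nth_map 0) //.
pose pi m := nth x l (pos a b m).
have hplay : forall m, R (pi m) (pi m.+1).
  move=> m; rewrite /pi /=.
  have lt := pos_lt ab m.
  have e2 : nth x l (if (pos a b m).+1 == b then a else (pos a b m).+1) = nth x l (pos a b m).+1.
    by case: eqP => // ->.
  rewrite e2; move/pathP: pt => /(_ x (pos a b m)).
  have -> : nth x t (pos a b m) = nth x l (pos a b m).+1 by [].
  by apply; rewrite -ltnS; apply: leq_trans bl; rewrite ltnS.
apply: (@winE pi).
- by move=> m; have /andP [] := hplay m.
- move=> m o; have /andP [_] := hplay m; rewrite (negbTE o) /= => /eqP //.
- by rewrite /pi /=; apply: lW; rewrite inE eqxx.
exists i; split => //.
  move=> N; exists (N + (b - pos a b N)); first by apply: leq_addr.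
  by rewrite /pi pos_hit // eab; apply/eqP.
exists 0 => m _; rewrite /pi; move/allP: al; apply; apply: mem_nth.
by apply: ltn_trans (pos_lt ab m) bl.
Qed.

Lemma Bnd_le i : Bnd i <= #|V|.
Proof. exact: max_card. Qed.

Lemma cnt_le i x : odd i -> x \in WE -> cnt i x <= Bnd i.
Proof.
move=> oi xW; apply/bigmax_leqP => c /bPP [t [pt al ct]].
by apply: leq_trans ct (pigeon oi xW pt al).
Qed.

Lemma cnt_ge i x c : Pth i x c -> c <= #|V| -> c <= cnt i x.
Proof.
move=> P le; have := @leq_bigmax_cond _ (fun c : 'I_#|V|.+1 => bP (Pth i x c)) (fun c => val c) (Ordinal (n:=#|V|.+1) (m:=c) le).
by apply; apply/bPP.
Qed.

Lemma cnt_spec i x : cnt i x = 0 \/ Pth i x (cnt i x).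
Proof.
pose A := [pred c : 'I_#|V|.+1 | bP (Pth i x c)].
case: (posnP #|A|) => hA.
  left; rewrite /cnt big_pred0 // => c; have := card0_eq hA c; rewrite inE => ->.
  by [].
right; have [c0 c0A e] := eq_bigmax_cond (fun c : 'I_#|V|.+1 => val c) hA.
have -> : cnt i x = c0 by rewrite /cnt -e.
by move: c0A; rewrite inE => /bPP.
Qed.

Lemma cnt_step i x y : odd i -> x \in WE -> R x y -> i <= pk x ->
  cnt i y + (pk x == i) <= cnt i x.
Proof.
move=> oi xW r ix.
have ext : forall c, Pth i y c -> Pth i x (c + (pk x == i)).
  move=> c [t [pt al ct]]; exists (y :: t); split.
  - by rewrite /= r.
  - by rewrite /= ix.
  - by rewrite /= addnC leq_add2l.
have bnd : forall c, Pth i x c -> c <= #|V|.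
  by move=> c [t [pt al ct]]; apply: leq_trans (Bnd_le i); apply: leq_trans ct (pigeon oi xW pt al).
case: (cnt_spec i y) => [->|h].
  case: eqP => e; rewrite ?add0n ?addn0 //.
  have P1 : Pth i x 1 by exists [::]; split => //=; [rewrite ix | rewrite e eqxx].
  by apply: cnt_ge P1 (bnd _ P1).
by have P2 := ext _ h; apply: cnt_ge P2 (bnd _ P2).
Qed.

Definition xf x i := if i < dim p then (if odd i then (if i < k then #|Vpr p i| else cnt i x) else 0) else 0.
Definition xi x := Tup (mkseq (xf x) (dim p)).

Lemma nth_xi x i : nth 0 (mkseq (xf x) (dim p)) i = xf x i.
Proof.
case: (ltnP i (dim p)) => h; first by rewrite nth_mkseq.
by rewrite nth_default ?size_mkseq // /xf ltnNge h.
Qed.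

Lemma xi_inM x : x \in WE -> inM p (xi x).
Proof.
move=> xW; apply/andP; split; first by rewrite size_mkseq.
apply/allP => i; rewrite mem_iota add0n => /= li; rewrite nth_xi /xf li.
case oi: (odd i) => //; case: ltnP => // ki.
apply: leq_trans (cnt_le oi xW) _; apply: subset_leq_card; apply/subsetP => z.
rewrite !inE => /andP [_ /eqP e]; rewrite /pk in e; apply/eqP.
by move: e; case: (p z < k) => // e; move: oi; rewrite -e.
Qed.

Lemma xi_step x y : x \in WE -> k <= p x -> R x y ->
  mle_i (p x) (xi y) (xi x) /\ (odd (p x) -> mlt_i (p x) (xi y) (xi x)).
Proof.
move=> xW kx r.
have cw : forall i, nth 0 (take (p x).+1 (mkseq (xf y) (dim p))) i <=
                    nth 0 (take (p x).+1 (mkseq (xf x) (dim p))) i.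
  move=> i; rewrite !nth_take0 !nth_xi; case: ltnP => // li.
  rewrite /xf; case: (i < dim p) => //; case oi: (odd i) => //; case: ltnP => // ki.
  by apply: leq_trans (cnt_step oi xW r _) => //; [apply: leq_addr | rewrite pk_p].
have sz : size (take (p x).+1 (mkseq (xf y) (dim p))) = size (take (p x).+1 (mkseq (xf x) (dim p))).
  by rewrite !size_take !size_mkseq.
split; first by apply: lexle_cw.
move=> ox; apply: lexlt_cw => //; exists (p x).
rewrite !nth_take0 ltnSn !nth_xi /xf p_dim ox (ltnNge (p x) k) kx /=.
have hh : p x <= pk x by rewrite pk_p.
have := cnt_step ox xW r hh.
by rewrite pk_p // eqxx addn1.
Qed.

Lemma sink_le x t : p x < k -> inM p (Tup t) ->
  (forall i, p x < i -> nth 0 t i = 0) -> mle (Tup t) (xi x).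
Proof.
move=> lt it zt; have /andP [/eqP sz _] := it.
apply: lexle_cw; first by rewrite size_mkseq.
move=> i; rewrite nth_xi; case: (leqP i (p x)) => h; last by rewrite zt.
have := inM_nth i it; rewrite /xf; case: ltnP => h2.
  by case: (odd i) => //; rewrite (leq_ltn_trans h lt).
by rewrite nth_default // sz.
Qed.

Lemma condv_xi x w (a : meas) : x \in WE -> k <= p x -> R x w -> w \in WE ->
  inM p a -> mle a (xi w) -> condv (p x) a (xi x).
Proof.
move=> xW kx r wW ia le; have [h1 h2] := xi_step xW kx r.
rewrite /condv; case ox: (odd (p x)).
  by rewrite (mle_mlt_i ia (xi_inM wW) (mle_i_of _ le) (h2 ox)).
by apply: mle_i_trans (mle_i_of _ le) h1.
Qed.

Lemma inv j : j <= n -> forall x, x \in WE -> mle (rhos j x) (xi x).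
Proof.
elim: j => [|j IH] ljn x xW.
  rewrite ls.1; apply: lexle_cw; first by rewrite size_nseq size_mkseq.
  by move=> i; rewrite nth_nseq if_same.
have [h1 [X [hX [w ew pw] h3]]] := lift_at ls ljn.
case: (eqVneq x (vs j)) => [ex|ne]; last by rewrite h1 // IH // ltnW.
have ljn' : j <= n by apply: ltnW.
case: (ltnP (p x) k) => kx.
  have ne : x != v by apply/eqP => e; move: kx; rewrite e ltnn.
  case e: (rhos j.+1 x) => [t|].
    apply: sink_le => //; [rewrite -e; exact: (lift_inM ls ljn) | exact: (lift_ztail ls ljn e)].
  exfalso; case: (ltngtP j.+1 n) => h.
  - by apply: (ntop h e).
  - by move: ljn; rewrite leqNgt h.
  - by move: vn ne; rewrite -h /= -ex => -> /eqP.
rewrite ex in xW kx *; rewrite h3; apply: mmax_le; first by apply: IH.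
have ir : forall y, inM p (rhos j y) by move=> y; exact: (lift_inM ls ljn').
move: hX; case: ifP => o [_ hm].
  have wW : w \in WE.
    have [_ h] := clE xW; apply: (h o); by rewrite Ek_E.
  have r : R (vs j) w by rewrite /R Ek_E // ew o.
  have [iX _ hX] := pw; apply: hX; first by apply: xi_inM.
  rewrite prog_cond_condv; apply: condv_xi r wW (ir w) (IH ljn' _ wW) => //.
have [et tW] := (clE xW).1 (negbT o).
have r : R (vs j) (tau (vs j)) by rewrite /R et eqxx orbT.
have [P0 pP] := prog_exists p (rhos j) (vs j) (tau (vs j)).
apply: (mle_trans (hm P0 _)).
  by exists (tau (vs j)) => //; rewrite -Ek_E.
have [iP _ hP] := pP; apply: hP; first by apply: xi_inM.
rewrite prog_cond_condv; apply: condv_xi r tW (ir _) (IH ljn' _ tW) => //.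
Qed.

Lemma v_WO : v \in WO.
Proof.
have := part v; case: (boolP (v \in WE)) => //= vW _.
by have := inv (leqnn n) vW; rewrite top.
Qed.

Lemma Bnd_k : Bnd k < #|Vpr p k|.
Proof.
apply: proper_card; apply/properP; split.
  apply/subsetP => z; rewrite !inE => /andP [_ /eqP e]; apply/eqP.
  by move: e; rewrite /pk; case: (p z < k) => // e; move: k_pos; rewrite -e.
exists v; first by rewrite inE.
rewrite inE negb_and; apply/orP; left; apply/negP => vW.
by have := disj vW; rewrite v_WO.
Qed.

Lemma nth_mkseq0 (f : nat -> nat) d i : nth 0 (mkseq f d) i = if i < d then f i else 0.
Proof. by case: ltnP => h; [rewrite nth_mkseq | rewrite nth_default // size_mkseq]. Qed.

Definition gm u i := if i < k then xf u i else if i == k then (cnt k u).+1 else 0.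

Lemma u_WO u : v \in VO -> E v u -> (forall w, E v w -> mle (rhos n w) (rhos n u)) -> u \in WO.
Proof.
move=> vO evu mx.
case: (eqVneq u v) => [->|ne]; first exact: v_WO.
have := part u; case: (boolP (u \in WE)) => //= uW _.
have [w0 ew0 [_ _ hT]] := X_top.
have lt : n.-1 < n by rewrite prednK.
have [X _ [_ h4]] := last_lift.
have ir : forall y, inM p (rhos n.-1 y) by move=> y; exact: (lift_inM ls (ltnW lt)).
have le1 : mle (rhos n.-1 w0) (rhos n.-1 u).
  rewrite -(h4 _ ne); apply: mle_trans (mx _ ew0).
  by have := lift_mono ls lt w0; rewrite prednK.
have kd := p_dim v.
have im : inM p (Tup (mkseq (gm u) (dim p))).
  apply/andP; split; first by rewrite size_mkseq.
  apply/allP => i; rewrite mem_iota add0n /= => li; rewrite nth_mkseq // /gm.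
  case: (ltnP i k) => ik.
    by rewrite /xf li; case: (odd i) => //; rewrite ik.
  case: eqP => [ei|ne2].
    rewrite ei k_odd; apply: leq_trans Bnd_k; rewrite ltnS.
    by apply: cnt_le => //; apply: k_odd.
  by case: (odd i).
have c1 : condv k (rhos n.-1 u) (Tup (mkseq (gm u) (dim p))).
  rewrite /condv k_odd; apply/orP; left.
  apply: (mle_mlt_i (ir u) (xi_inM uW) (mle_i_of _ (inv (ltnW lt) uW))).
  rewrite /mlt_i /xi; apply: lexlt_cw; first by rewrite !size_take !size_mkseq.
    move=> i; rewrite !nth_take0 nth_xi nth_mkseq0; case: ltnP => // ik1.
    rewrite (leq_trans ik1 kd) /gm /xf (leq_trans ik1 kd); case: (ltnP i k) => // ik.
    have -> : i = k by apply/eqP; rewrite eqn_leq ik -ltnS ik1.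
    by rewrite eqxx k_odd.
  exists k; rewrite !nth_take0 ltnSn nth_xi nth_mkseq0 kd /gm /xf kd ltnn eqxx k_odd.
  by [].

have := hT _ im; rewrite prog_cond_condv.
by move=> /(_ (condv_mono (ir _) (ir _) le1 c1)).
Qed.


Definition AI j := attr_iter E p VO k [set v] j.
Definition Ii := AI #|V|.

Lemma astep_ext' (Y : {set V}) : Y \subset attr_step E p VO k Y.
Proof. exact: subsetUl. Qed.

Lemma AI_mono i j : i <= j -> AI i \subset AI j.
Proof. by rewrite /AI /attr_iter; apply: it_mono => Y; apply: astep_ext'. Qed.
Lemma AI_I j : AI j \subset Ii.
Proof. by rewrite /Ii /AI /attr_iter; apply: it_sub => Y; apply: astep_ext'. Qed.
Lemma I_fix : attr_step E p VO k Ii = Ii.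
Proof. by rewrite /Ii /AI /attr_iter; apply: it_fix => Y; apply: astep_ext'. Qed.
Lemma v_I : v \in Ii.
Proof. by apply: (subsetP (AI_I 0)); rewrite /AI /= inE. Qed.

Lemma AI_ge j x : x \in AI j -> k <= p x.
Proof.
elim: j x => [|j IH] x; first by rewrite /AI /= inE => /eqP ->.
have -> : AI j.+1 = attr_step E p VO k (AI j) by [].
rewrite {1}/attr_step in_setU => /orP [/IH //|]; by rewrite !inE => /andP [].
Qed.
Lemma I_ge x : x \in Ii -> k <= p x.
Proof. exact: AI_ge. Qed.

Lemma AI_spec j x : x \in AI j.+1 -> x = v \/
  ((x \in VO -> exists2 w, E x w & w \in AI j) /\ (x \notin VO -> forall w, E x w -> w \in AI j)).
Proof.
elim: j x => [|j IH] x.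
  rewrite /AI /= /attr_step in_setU => /orP [|]; first by rewrite inE => /eqP; left.
  rewrite inE => /andP [_]; rewrite /attr_cond; case: ifP => o h; right; split => // _.
    by have /existsP [w /andP [? ?]] := h; exists w.
  by move=> w ew; have /forallP /(_ w) := h; rewrite ew.
have -> : AI j.+2 = attr_step E p VO k (AI j.+1) by [].
rewrite {1}/attr_step in_setU => /orP [xin|].
  have [->|[h1 h2]] := IH _ xin; first by left.
  right; split.
    by move=> o; have [w ? ?] := h1 o; exists w => //; apply: (subsetP (astep_ext' _)).
  by move=> o w ew; apply: (subsetP (astep_ext' _)); apply: h2.
rewrite inE => /andP [_]; rewrite /attr_cond; case: ifP => o h; right; split => // _.
  by have /existsP [w /andP [? ?]] := h; exists w.
by move=> w ew; have /forallP /(_ w) := h; rewrite ew.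
Qed.

Lemma attr_cond_mono (A B : {set V}) u : A \subset B -> attr_cond E VO A u -> attr_cond E VO B u.
Proof.
move=> AB; rewrite /attr_cond; case: ifP => _.
  by move=> /existsP [w /andP [e wA]]; apply/existsP; exists w; rewrite e (subsetP AB).
move=> /forallP h; apply/forallP => w; apply/implyP => e.
by apply: (subsetP AB); have := h w; rewrite e.
Qed.

Lemma I_A : Ii \subset Attr E p VO k [set v].
Proof.
apply/bigcapsP => B /and3P [vB BV /forallP cl].
suff : forall j, AI j \subset B by apply.
elim=> [|j IH] //=; apply/subsetP => x; rewrite /attr_step in_setU => /orP [/(subsetP IH)//|].
rewrite inE => /andP [xg c]; have := cl x; rewrite xg /=.
by move=> /implyP; apply; apply: attr_cond_mono c.
Qed.

Lemma A_WO : Attr E p VO k [set v] \subset WO.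
Proof.
apply: bigcap_inf; apply/and3P; split.
- by rewrite sub1set v_WO.
- by apply/subsetP => x xO; rewrite inE; apply: WO_ge.
apply/forallP => u; apply/implyP => /andP [ug c].
have ku : k <= p u by move: ug; rewrite inE.
have := part u; case: (boolP (u \in WE)) => //= uW _.
move: c; rewrite /attr_cond; case: ifP => o.
  move=> /existsP [w /andP [e wO]]; have [_ h] := clE uW.
  have ew : Ek u w by rewrite Ek_E.
  by have := disj (h o w ew); rewrite wO.
move=> /forallP h; have [h1 _] := clE uW; have [e tW] := h1 (negbT o).
have := h (tau u); rewrite -Ek_E // e /= => tO.
by have := disj tW; rewrite tO.
Qed.

Lemma sigA_ex : exists sA : V -> V, forall x, x \in VO -> x \in Ii -> x != v ->
   E x (sA x) /\ forall j, x \in AI j.+1 -> sA x \in AI j.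
Proof.
apply: (@fchoice V V (fun x y => x \in VO -> x \in Ii -> x != v ->
   E x y /\ forall j, x \in AI j.+1 -> y \in AI j)) => x.
case: (classic (x \in VO /\ x \in Ii /\ x != v)); last first.
  by move=> H; exists x => h1 h2 h3; case: H.
move=> [o [xI nv]].
have ex : exists j, x \in AI j.+1.
  move: xI; rewrite /Ii; case: #|V| => [|m] /=; first by rewrite /AI /= inE (negbTE nv).
  by exists m.
case: (ex_minnP ex) => j0 xj0 mn.
have [e|[h1 _]] := AI_spec xj0; first by move: nv; rewrite e eqxx.
have [y ey yj] := h1 o; exists y => _ _ _; split => // j xj.
by apply: (subsetP (AI_mono (mn _ xj))).
Qed.

Hypothesis Etot : forall x, exists y, E x y.

Definition sigma (sA nx : V -> V) (u0 : V) x :=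
  if x == v then u0 else if x \in Ii then sA x else if E x (sig0 x) then sig0 x else nx x.

Lemma odd_wins_ext (f g : V -> nat) pi : (forall i, f (pi i) = g (pi i)) ->
  odd_wins f pi -> odd_wins g pi.
Proof.
move=> e [q [oq inf [N ev]]]; exists q; split => //.
  by move=> M; have [i l h] := inf M; exists i => //; rewrite -e.
by exists N => i l; rewrite -e; apply: ev.
Qed.

Lemma final u0 : u0 \in WO -> (v \in VO -> E v u0) ->
  exists sg : V -> V, [/\ is_strategy E VO sg, closed_on E VO sg WO, wins_from E p VO sg WO,
     attracting E p VO k [set v] sg & sg v = u0].
Proof.
move=> u0O evu.
have [sA hA] := sigA_ex.
have [nx hnx] : exists nx : V -> V, forall x, E x (nx x) by apply: (@fchoice V V (fun x y => E x y)).
set sg := sigma sA nx u0.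
have sgI : forall x, x \in VO -> x \in Ii -> x != v -> sg x = sA x.
  by move=> x o xI nv; rewrite /sg /sigma (negbTE nv) xI.
have sgO : forall x, x \in VO -> x \in WO -> x \notin Ii -> sg x = sig0 x.
  move=> x o xO xI; have nv : x != v by apply/eqP => e; move: xI; rewrite e v_I.
  rewrite /sg /sigma (negbTE nv) (negbTE xI).
  have [e _] := clO xO; have [e1 _] := e o.
  by rewrite -Ek_E ?e1 // WO_ge.
have cpos : forall x : V, exists m, #|V| = m.+1.
  by move=> x; case e: #|V| => [|m]; [move: (max_card (pred1 x)); rewrite card1 e | exists m].
have sAI : forall x, x \in VO -> x \in Ii -> x != v -> sA x \in Ii.
  move=> x o xI nv; have [m em] := cpos x; have [_ h] := hA x o xI nv.
  by apply: (subsetP (AI_I m)); apply: h; rewrite -em.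
have IO : forall x, x \in Ii -> x \in WO.
  by move=> x xI; apply: (subsetP A_WO); apply: (subsetP I_A).
have clos : closed_on E VO sg WO.
  move=> pi pl co p0; elim=> [|i IH] //.
  case: (boolP (pi i \in VO)) => o.
    rewrite (co _ o); case: (eqVneq (pi i) v) => [e|nv].
      by rewrite /sg /sigma e eqxx.
    case: (boolP (pi i \in Ii)) => xI; first by rewrite sgI //; apply: IO; apply: sAI.
    by rewrite sgO //; have [e _] := clO IH; case: (e o).
  by have [_ h] := clO IH; apply: (h o); rewrite Ek_E; [exact: pl | exact: WO_ge].
exists sg; split => //.
- move=> x o; case: (eqVneq x v) => [exv|nv]; first by rewrite /sg /sigma exv eqxx; apply: evu; rewrite -exv.
  case: (boolP (x \in Ii)) => xI; first by rewrite sgI //; case: (hA x o xI nv).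
  rewrite /sg /sigma (negbTE nv) (negbTE xI); case: ifP => //.
- move=> pi pl co p0.
  have st := clos pi pl co p0.
  case: (classic (forall N, exists2 i, N <= i & pi i \in Ii)) => [inf|fin].
    have step : forall i j, pi i \in AI j.+1 -> pi i \in AI 0 \/ pi i.+1 \in AI j.
      move=> i j h; case: (eqVneq (pi i) v) => [e|nv]; first by left; rewrite e /AI /= inE.
      have [e|[h1 h2]] := AI_spec h; first by move: nv; rewrite e eqxx.
      right; case: (boolP (pi i \in VO)) => o; last by apply: h2 => //; apply: pl.
      have xI : pi i \in Ii by apply: (subsetP (AI_I _)) h.
      rewrite (co _ o) sgI //; have [_ h3] := hA _ o xI nv; exact: h3.
    have reachv : forall j i, pi i \in AI j -> exists2 i', i <= i' & pi i' \in AI 0.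
      elim=> [|j IHj] i h; first by exists i.
      have [h0|h1] := step _ _ h; first by exists i.
      by have [i' l h'] := IHj _ h1; exists i' => //; apply: ltnW.
    exists k; split; first exact: k_odd.
      move=> N; have [i l iI] := inf N; have [i' l' h'] := reachv _ _ iI.
      exists i'; first by apply: leq_trans l l'.
      by move: h'; rewrite /AI /= inE => /eqP ->.
    by exists 0 => i _; apply: WO_ge.
  have [N hN] : exists N, forall i, N <= i -> pi i \notin Ii.
    apply: NNPP => H; apply: fin => N; apply: NNPP => H3; apply: H; exists N => i le.
    by apply/negP => iI; apply: H3; exists i.
  apply: (proj1 (odd_wins_shift p pi N)).
  apply: (@odd_wins_ext pk p); first by move=> i; rewrite pk_p //; apply: WO_ge; apply: st.
  apply: winO.
  + move=> i; rewrite /shift addnS Ek_E; first exact: pl.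
    by apply: WO_ge; apply: st.
  + move=> i o; have h1 := st (N + i); have h2 := hN (N + i) (leq_addr _ _).
    by rewrite /shift addnS (co _ o) sgO.
  + by rewrite /shift addn0.
- move=> j x o xv xj1 xj; have nv : x != v by move: xv; rewrite inE.
  have xI : x \in Ii by apply: (subsetP (AI_I _)) xj1.
  by rewrite sgI //; have [_ h] := hA _ o xI nv; apply: h.
- by rewrite /sg /sigma eqxx.
Qed.
End Main.


Theorem theorem4 (V : finType) (E : rel V) (p : V -> nat) (VO : {set V})
  (Etot : forall v : V, exists w, E v w)
  (rhos : nat -> V -> meas) (vs : nat -> V) (n : nat) (v : V) :
  lifting_seq E p VO rhos vs n ->
  0 < n -> vs n.-1 = v -> rhos n v = Top ->
  (forall j u, j < n -> rhos j u <> Top) ->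
  let rho := rhos n in
  let k := p v in
  let A := Attr E p VO k [set v] in
  (v \in VO ->
     forall u, E v u -> (forall w, E v w -> mle (rho w) (rho u)) ->
     exists D : {set V},
       [/\ odd_dominion E p VO D, A \subset D,
           (forall w, w \in D -> k <= p w) &
           exists sigma : V -> V,
             [/\ is_strategy E VO sigma, closed_on E VO sigma D,
                 wins_from E p VO sigma D, sigma v = u &
                 attracting E p VO k [set v] sigma]]) /\
  (v \notin VO ->
     exists D : {set V},
       [/\ odd_dominion E p VO D, A \subset D,
           (forall w, w \in D -> k <= p w),
           (exists sigma : V -> V,
             [/\ is_strategy E VO sigma, closed_on E VO sigma D,
                 wins_from E p VO sigma D &
                 attracting E p VO k [set v] sigma]) &
           post E v \subset D]).
Proof.
move=> ls n0 vn top ntop rho kk A.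
have tot : totalU (Ek E p v) [set: V].
  move=> x _; case: (ltnP (p x) (p v)) => h.
    by exists x; rewrite ?inE // /Ek /k h eqxx.
  have [y ey] := Etot x; exists y; rewrite ?inE //.
  by rewrite Ek_E.
have [W [s zs]] := zielonka (pk p v) VO tot.
have vO' := v_WO ls n0 vn top ntop zs.
split.
  move=> vO u evu mx.
  have uO := u_WO ls n0 vn top ntop zs vO evu mx.
  have [sg [h1 h2 h3 h4 h5]] := final ls n0 vn top ntop zs Etot uO (fun _ => evu).
  exists (WO W); split.
  - by exists sg.
  - exact: (A_WO ls n0 vn top ntop zs).
  - by move=> w wO; apply: (WO_ge zs).
  - by exists sg.
move=> vO.
have [sg [h1 h2 h3 h4 h5]] := final ls n0 vn top ntop zs Etot vO' (fun h => False_ind _ (negP vO h)).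
exists (WO W); split.
- by exists sg.
- exact: (A_WO ls n0 vn top ntop zs).
- by move=> w wO; apply: (WO_ge zs).
- by exists sg.
- apply/subsetP => y; rewrite inE => evy.
  have [_ h] := clO zs vO'; apply: (h vO).
  by rewrite Ek_E.
Qed.
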